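(* Suppose Assumption D holds. Let $P\in\Delta(\Theta,\mathcal{B})$, $\eta>0$, let $\pi:\Theta\to\mathbb{R}$ be bounded and measurable, let $\mathcal{E}$ be a $\sigma$-algebra, and let $\bar\pi:=\mathbb{E}_P[\pi\mid\mathcal{E}]$. Then $$\inf_Q\{\mathbb{E}_Q[\bar\pi]:D(Q\|P)\le\eta\}\ \ge\ \inf_Q\{\mathbb{E}_Q[\pi]:D(Q\|P)\le\eta\},$$ where $Q$ ranges over $\Delta(\Theta,\mathcal{B})$.
   Context: $\Theta=[\underline\theta,\bar\theta]\subset\mathbb{R}$ ($0<\underline\theta<\bar\theta$) with Borel $\sigma$-algebra $\mathcal{B}$; ''$\sigma$-algebra'' means a sub-$\sigma$-algebra of $\mathcal{B}$; $\Delta(\Theta,\mathcal{A})$ is the set of probability measures on $(\Theta,\mathcal{A})$; $P_{\mathcal{E}}$ is the restriction of $P$ to $\mathcal{E}$. A divergence $D$ assigns to each pair $Q,P$ of probability measures on a common $\sigma$-algebra a number $D(Q\|P)\in[0,\infty]$. Assumption D: for every $\sigma$-algebra $\mathcal{A}$ and $P,Q\in\Delta(\Theta,\mathcal{A})$: (D1) $D(Q\|P)=0$ if $Q=P$; (D2) if $Q\ll P$ and $dQ/dP$ is bounded, $\epsilon\mapsto D(\epsilon Q+(1-\epsilon)P\|P)$ is continuous on $[0,1]$; (D3) $D(Q\|P)<\infty$ implies $Q\ll P$; (D4) $D(Q_{\mathcal{E}}\|P_{\mathcal{E}})\le D(Q\|P)$ for every sub-$\sigma$-algebra $\mathcal{E}\subset\mathcal{A}$;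 (D5) $D(Q_{\mathcal{E}}\|P_{\mathcal{E}})=D(Q\|P)$ whenever $dQ_{\mathcal{E}}/dP_{\mathcal{E}}=dQ/dP$ $P$-a.e. *)

(* Defs.v *)
From HB Require Import structures.
From mathcomp Require Import all_boot all_order all_algebra.
From mathcomp Require Import all_classical all_reals all_analysis.

Set Implicit Arguments.
Unset Strict Implicit.
Unset Printing Implicit Defensive.

Import Order.TTheory GRing.Theory Num.Theory.
Local Open Scope classical_set_scope.
Local Open Scope ring_scope.

Section Defs.
Variables (R : realType) (tl tu : R) (htlu : tl < tu).

Definition Theta (h : tl < tu) : Type := {x : R | tl <= x <= tu}.
Local Notation Th := (Theta htlu).

Lemma tl_in_Theta : tl <= tl <= tu.
Proof. by rewrite lexx (ltW htlu). Qed.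

HB.instance Definition _ := Choice.on Th.
HB.instance Definition _ :=
  isPointed.Build Th (exist (fun x : R => tl <= x <= tu) tl tl_in_Theta).

Definition borel_Theta : set (set Th) :=
  [set (@proj1_sig R (fun x : R => tl <= x <= tu)) @^-1` Y
     | Y in [set Y : set R | measurable Y]].

(** "sigma-algebra" = sub-sigma-algebra of the Borel sigma-algebra of Theta. *)
Definition sub_sigma (E : set (set Th)) : Prop :=
  sigma_algebra [set: Th] E /\ E `<=` borel_Theta.

(** Probability measures on (Theta, A): the measurable type whose measurable
    sets are <<s A >> (= A when A is a sigma-algebra). *)
Notation Meas A := (g_sigma_algebraType A).

(** A divergence: to each sigma-algebra A and pair (Q, P) in Delta(Theta, A)
    a value D A Q P = D(Q||P) in [0, +oo]. *)
Definition divergence :=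
  forall A : set (set Th),
    probability (Meas A) R -> probability (Meas A) R -> \bar R.

Definition has_density (E A : set (set Th))
    (Q P : probability (Meas A) R) (f : Th -> R) : Prop :=
  [/\ measurable_fun [set: Meas E] f, (forall x, 0 <= f x) &
      forall X : set (Meas A), measurable X ->
        Q X = (\int[P]_(x in X) (f x)%:E)%E].

Definition restricts (E A : set (set Th))
    (Q' : probability (Meas E) R) (Q : probability (Meas A) R) : Prop :=
  forall X : set Th, E X -> Q' X = Q X.

Definition assumptionD (D : divergence) : Prop :=
  forall A : set (set Th), sub_sigma A ->
  forall P Q : probability (Meas A) R,
  (0 <= D A Q P)%E /\
  [/\
   (forall X : set (Meas A), measurable X -> Q X = P X) -> D A Q P = 0%E,
   (forall (f : Th -> R) (M : R), has_density A Q P f ->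
      (forall x, f x <= M) ->
      forall Mix : R -> probability (Meas A) R,
        (forall (e : R) (X : set (Meas A)), 0 <= e <= 1 -> measurable X ->
           Mix e X = (e%:E * Q X + (1 - e)%:E * P X)%E) ->
        {within `[0, 1]%classic, continuous (fun e : R => D A (Mix e) P)}),
   (D A Q P < +oo)%E -> Q `<< P,
   (forall E : set (set Th), sigma_algebra [set: Th] E -> E `<=` A ->
      forall Q' P' : probability (Meas E) R,
        restricts Q' Q -> restricts P' P -> (D E Q' P' <= D A Q P)%E) &
   (forall E : set (set Th), sigma_algebra [set: Th] E -> E `<=` A ->
      forall Q' P' : probability (Meas E) R,
        restricts Q' Q -> restricts P' P ->
        (exists f : Th -> R, has_density E Q P f) ->
        D E Q' P' = D A Q P)].

Definition cond_exp (P : probability (Meas borel_Theta) R)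
    (E : set (set Th)) (pi pibar : Th -> R) : Prop :=
  [/\ measurable_fun [set: Meas E] pibar,
      P.-integrable [set: Meas borel_Theta] (fun x => (pibar x)%:E) &
      forall X : set Th, E X ->
        (\int[P]_(x in X) (pibar x)%:E = \int[P]_(x in X) (pi x)%:E)%E].

End Defs.

Arguments borel_Theta {R tl tu} htlu.

(* Main.v *)
Require Import Defs.
From HB Require Import structures.
From mathcomp Require Import all_boot all_order all_algebra.
From mathcomp Require Import all_classical all_reals all_analysis measurable_realfun.
From mathcomp Require Import lra.
Import Order.TTheory GRing.Theory Num.Theory.
Local Open Scope classical_set_scope.
Local Open Scope ring_scope.
Set Implicit Arguments.
Unset Strict Implicit.

Section resm.
Local Open Scope ereal_scope.
Context (T : pointedType) (G1 G2 : set (set T)) (R : realType).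
Notation M1 := (g_sigma_algebraType G1).
Notation M2 := (g_sigma_algebraType G2).

Definition resP (h : forall A, <<s G2 >> A -> <<s G1 >> A)
  (mu : probability M1 R) : set M2 -> \bar R := fun A => mu A.
Definition resF (h : forall A, <<s G2 >> A -> <<s G1 >> A)
  (mu : {finite_measure set M1 -> \bar R}) : set M2 -> \bar R := fun A => mu A.

Variable h : forall A, <<s G2 >> A -> <<s G1 >> A.

Section P.
Variable mu : probability M1 R.
Let r0 : resP h mu set0 = 0. Proof. exact: measure0. Qed.
Let rge0 A : 0 <= resP h mu A. Proof. exact: measure_ge0. Qed.
Let rsa : semi_sigma_additive (resP h mu).
Proof.
move=> F mF tF mUF; apply: (@measure_semi_sigma_additive _ M1 R mu F) => //.
- by move=> n; apply: h; exact: mF.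
- exact: h.
Qed.
HB.instance Definition _ := isMeasure.Build _ _ _ (resP h mu) r0 rge0 rsa.
Let r1 : resP h mu setT = 1. Proof. exact: probability_setT. Qed.
HB.instance Definition _ := Measure_isProbability.Build _ _ _ (resP h mu) r1.
End P.

Section F.
Variable mu : {finite_measure set M1 -> \bar R}.
Let r0 : resF h mu set0 = 0. Proof. exact: measure0. Qed.
Let rge0 A : 0 <= resF h mu A. Proof. exact: measure_ge0. Qed.
Let rsa : semi_sigma_additive (resF h mu).
Proof.
move=> F mF tF mUF; apply: (@measure_semi_sigma_additive _ M1 R mu F) => //.
- by move=> n; apply: h; exact: mF.
- exact: h.
Qed.
HB.instance Definition _ := isMeasure.Build _ _ _ (resF h mu) r0 rge0 rsa.
Let rfin : fin_num_fun (resF h mu).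
Proof. by move=> A mA; apply: fin_num_measure; exact: h. Qed.
HB.instance Definition _ := Measure_isFinite.Build _ _ _ (resF h mu) rfin.
End F.

Lemma id_mfun : measurable_fun [set: M1] (id : M1 -> M2).
Proof. by move=> _ Y mY; rewrite setTI; exact: h. Qed.

Lemma mfun21 (f : M2 -> \bar R) : measurable_fun [set: M2] f -> measurable_fun [set: M1] (fun x : M1 => f x).
Proof. move=> mf _ Y mY; apply: h; exact: mf. Qed.

Lemma transfer (mu : {measure set M1 -> \bar R}) (D : set M2) (f : M2 -> \bar R) :
  measurable D -> measurable_fun [set: M2] f -> (forall x, 0 <= f x) ->
  \int[(fun A : set M2 => mu A)]_(x in D) f x = \int[mu]_(x in D) f x.
Proof.
move=> mD mf f0.
have := @ge0_integral_pushforward _ _ M1 M2 R id id_mfun mu D f mD (measurable_funTS mf) (fun x _ => f0 x).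
done.
Qed.

Lemma transferS (mu : {measure set M1 -> \bar R}) (D : set M2) (f : M2 -> \bar R) :
  measurable D -> measurable_fun [set: M2] f -> mu.-integrable (D : set M1) f ->
  \int[(fun A : set M2 => mu A)]_(x in D) f x = \int[mu]_(x in D) f x.
Proof.
move=> mD mf intf.
exact: (@integral_pushforward _ _ M1 M2 R id id_mfun mu D f mf intf mD).
Qed.

Lemma integrable_transfer (mu : {measure set M1 -> \bar R}) (D : set M2) (f : M2 -> \bar R) :
  measurable D -> measurable_fun [set: M2] f -> mu.-integrable (D : set M1) f ->
  (fun A : set M2 => mu A).-integrable D f.
Proof.
move=> mD mf intf.
exact: (@integrable_pushforward _ _ M1 M2 R id id_mfun mu D f mf intf mD).
Qed.

Lemma transferP (mu : probability M1 R) (D : set M2) (f : M2 -> \bar R) :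
  measurable D -> measurable_fun [set: M2] f -> (forall x, 0 <= f x) ->
  \int[resP h mu]_(x in D) f x = \int[mu]_(x in D) f x.
Proof. exact: transfer. Qed.

End resm.


Section dens.
Local Open Scope ereal_scope.
Context d (T : measurableType d) (R : realType).

Definition densF (mu : {measure set T -> \bar R}) (f : T -> \bar R)
  (mf : measurable_fun setT f) (f0 : forall x, 0 <= f x)
  (fi : mu.-integrable setT f) : set T -> \bar R :=
  fun A => \int[mu]_(x in A) f x.
Definition densP (mu : {measure set T -> \bar R}) (f : T -> \bar R)
  (mf : measurable_fun setT f) (f0 : forall x, 0 <= f x)
  (f1 : \int[mu]_x f x = 1) : set T -> \bar R :=
  fun A => \int[mu]_(x in A) f x.

Section F.
Variables (mu : {measure set T -> \bar R}) (f : T -> \bar R)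
  (mf : measurable_fun setT f) (f0 : forall x, 0 <= f x)
  (fi : mu.-integrable setT f).
Let r0 : densF mf f0 fi set0 = 0. Proof. exact: integral_set0. Qed.
Let rge0 A : 0 <= densF mf f0 fi A. Proof. exact: integral_ge0. Qed.
Let rsa : semi_sigma_additive (densF mf f0 fi).
Proof. exact: (@semi_sigma_additive_nng_induced d T R mu f mf f0). Qed.
HB.instance Definition _ := isMeasure.Build _ _ _ (densF mf f0 fi) r0 rge0 rsa.
Let rfin : fin_num_fun (densF mf f0 fi).
Proof. move=> A mA; rewrite /densF; apply: integrable_fin_num => //; exact: (integrableS measurableT mA (subsetT A) fi). Qed.
HB.instance Definition _ := Measure_isFinite.Build _ _ _ (densF mf f0 fi) rfin.
End F.

Section P.
Variables (mu : {measure set T -> \bar R}) (f : T -> \bar R)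
  (mf : measurable_fun setT f) (f0 : forall x, 0 <= f x)
  (f1 : \int[mu]_x f x = 1).
Let r0 : densP mf f0 f1 set0 = 0. Proof. exact: integral_set0. Qed.
Let rge0 A : 0 <= densP mf f0 f1 A. Proof. exact: integral_ge0. Qed.
Let rsa : semi_sigma_additive (densP mf f0 f1).
Proof. exact: (@semi_sigma_additive_nng_induced d T R mu f mf f0). Qed.
HB.instance Definition _ := isMeasure.Build _ _ _ (densP mf f0 f1) r0 rge0 rsa.
Let r1 : densP mf f0 f1 setT = 1. Proof. exact: f1. Qed.
HB.instance Definition _ := Measure_isProbability.Build _ _ _ (densP mf f0 f1) r1.
End P.

Lemma bnd_int (mu : {finite_measure set T -> \bar R}) (f : T -> R) (K : R) :
  measurable_fun setT f -> (forall x, (`|f x| <= K)%R) ->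
  mu.-integrable setT (EFin \o f).
Proof.
move=> mf fK.
have := @finite_measure_integrable_cst _ T R mu setT K measurableT.
apply: le_integrable => //; first exact/measurable_EFinP.
move=> x _ /=; rewrite lee_fin (ger0_norm (le_trans (normr_ge0 _) (fK x))).
exact: fK.
Qed.

Lemma DC (mu nu : {finite_measure set T -> \bar R}) (g : T -> \bar R)
  (mg : measurable_fun setT g) (g0 : forall x, 0 <= g x)
  (hg : forall A, measurable A -> nu A = \int[mu]_(x in A) g x)
  (f : T -> \bar R) (mf : measurable_fun setT f) (f0 : forall x, 0 <= f x) :
  \int[mu]_x (f x * g x) = \int[nu]_x f x.
Proof.
have numu : nu `<< mu.
  apply/null_content_dominatesP => A mA muA.
  rewrite hg // null_set_integral //; exact: measurable_funTS.
rewrite -(@Radon_Nikodym_SigmaFinite.change_of_variables d T R nu mu numu f setT f0 measurableT mf).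
have mRN : measurable_fun setT (Radon_Nikodym_SigmaFinite.f nu mu).
  exact: measurable_int (Radon_Nikodym_SigmaFinite.f_integrable numu).
apply: ae_eq_integral => //.
- exact: emeasurable_funM.
- exact: emeasurable_funM.
apply: ae_eqe_mul2l; apply: ae_eq_sym.
apply: integral_ae_eq => //.
- exact: Radon_Nikodym_SigmaFinite.f_integrable.
- move=> A _ mA; rewrite -Radon_Nikodym_SigmaFinite.f_integral //; exact: hg.
Qed.
End dens.


Section main.
Local Open Scope ereal_scope.
Variables (R : realType) (tl tu : R) (htlu : (tl < tu)%R).
Notation Th := (Theta htlu).
Notation B := (borel_Theta htlu).
Notation MB := (g_sigma_algebraType B).
Variable E : set (set Th).
Notation ME := (g_sigma_algebraType E).
Hypothesis sigE : sigma_algebra [set: Th] E.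
Hypothesis EB : E `<=` B.

Lemma hEB : forall A, <<s E >> A -> <<s B >> A.
Proof.
move=> A; rewrite sigma_algebra_id // => /EB; exact: sub_sigma_algebra.
Qed.

Lemma mEE X : <<s E >> X -> E X.
Proof. by rewrite sigma_algebra_id. Qed.

Variable P : probability MB R.
Notation PE := (resP hEB P : probability ME R).

Lemma tower (K : R) (h : Th -> R) (hm : measurable_fun [set: MB] h)
  (h0 : forall x, (0 <= h x)%R) (hK : forall x, (h x <= K)%R)
  (hb : Th -> R) (hbm : measurable_fun [set: ME] hb)
  (hbi : P.-integrable [set: MB] (EFin \o hb))
  (hbint : forall X, E X -> \int[P]_(x in X) (hb x)%:E = \int[P]_(x in X) (h x)%:E) :
  exists r : ME -> \bar R, [/\ forall x, 0 <= r x, measurable_fun [set: ME] r,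
    ae_eq PE [set: ME] (EFin \o hb) r &
    forall phi : ME -> \bar R, measurable_fun [set: ME] phi -> (forall x, 0 <= phi x) ->
      \int[P]_x (phi x * (h x)%:E) = \int[PE]_x (phi x * r x)].
Proof.
have mh' : measurable_fun [set: MB] (EFin \o h) by exact/measurable_EFinP.
have h0' : forall x : MB, 0 <= (EFin \o h) x by move=> x; rewrite lee_fin.
have hi : P.-integrable [set: MB] (EFin \o h).
  have := @finite_measure_integrable_cst _ MB R P setT K measurableT. apply: le_integrable => //.
  move=> x _ /=; rewrite lee_fin (ger0_norm (h0 x)) (ger0_norm (le_trans (h0 x) (hK x))).
  exact: hK.
pose la := (densF mh' h0' hi : {finite_measure set MB -> \bar R}).
pose laE := (resF hEB la : {finite_measure set ME -> \bar R}).
have laP : laE `<< PE.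
  apply/null_content_dominatesP => A mA PA0.
  rewrite /laE /resF /= /densF null_set_integral //.
  - exact: hEB.
  - exact: measurable_funTS.
have r0 := Radon_Nikodym_SigmaFinite.f_ge0 laP.
have ri := Radon_Nikodym_SigmaFinite.f_integrable laP.
have rE := Radon_Nikodym_SigmaFinite.f_integral laP.
have mr := measurable_int _ ri.
exists (Radon_Nikodym_SigmaFinite.f laE PE); split => //.
- apply: integral_ae_eq => //.
  + apply: (integrable_transfer hEB) => //; exact/measurable_EFinP.
  + move=> X _ mX.
    rewrite -rE // (transferS hEB) //; first last.
    * by apply: (integrableS measurableT _ (subsetT _) hbi); exact: hEB.
    * exact/measurable_EFinP.
    by rewrite hbint //; apply: mEE.
- move=> phi mphi phi0.
  rewrite (@DC _ MB R P la (EFin \o h)) //; first last.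
  + exact: mfun21 hEB _ mphi.
  rewrite (@Radon_Nikodym_SigmaFinite.change_of_variables _ ME R laE PE laP phi setT phi0 measurableT mphi).
  by rewrite /laE /resF /= (@transfer _ _ _ R hEB la setT phi measurableT mphi phi0).
Qed.


Lemma sigB : sigma_algebra [set: Th] B.
Proof.
have -> : B = preimage_set_system [set: Th]
    (@proj1_sig R (fun x : R => (tl <= x <= tu)%R)) [set Y : set R | measurable Y].
  apply/funext => X; apply/propext; split => -[Y mY <-]; exists Y => //;
    by rewrite setTI.
apply: sigma_algebra_preimage; exact: sigma_algebra_measurable.
Qed.

Lemma subB : sub_sigma B.
Proof. by split; [exact: sigB|]. Qed.

Variables (D : divergence htlu) (HD : assumptionD D).
Variables (M : R) (pi : Th -> R) (piM : forall x, (`|pi x| <= M)%R)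
  (hpim : measurable_fun [set: MB] pi)
  (pibar : Th -> R) (hpibar : cond_exp P E pi pibar).

Lemma perQ (Q : probability MB R) (eta : R) : D Q P <= eta%:E ->
  exists Q' : probability MB R, D Q' P <= eta%:E /\ (\int[Q']_x (pi x)%:E) = (\int[Q]_x (pibar x)%:E).
Proof.
move=> hQ.
have [_ [_ _ D3 D4 D5]] := HD subB P Q.
have QP : Q `<< P by apply: D3; exact: (le_lt_trans hQ (ltry _)).
have QP' := proj1 (null_content_dominatesP _ _) QP.
pose QE := (resP hEB Q : probability ME R).
have QEPE : QE `<< PE.
  apply/null_content_dominatesP => A mA PA0.
  exact: QP' _ (hEB mA) PA0.
pose rn := Radon_Nikodym_SigmaFinite.f QE PE.
have rn0 := Radon_Nikodym_SigmaFinite.f_ge0 QEPE.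
have rnfin := Radon_Nikodym_SigmaFinite.f_fin_num QEPE.
have rni := Radon_Nikodym_SigmaFinite.f_integrable QEPE.
have rnE := Radon_Nikodym_SigmaFinite.f_integral QEPE.
have mrn := measurable_int _ rni.
pose gh x := fine (rn x).
have ghE x : (gh x)%:E = rn x by rewrite fineK // rnfin.
have mgh : measurable_fun [set: ME] gh.
  apply/measurable_EFinP; rewrite (_ : EFin \o gh = rn) //.
  by apply/funext => x /=; rewrite ghE.
have mgh' : measurable_fun [set: ME] (EFin \o gh) by exact/measurable_EFinP.
have mghB : measurable_fun [set: MB] (EFin \o gh) := @mfun21 _ _ _ R hEB _ mgh'.
have gh0 : forall x : MB, 0 <= (EFin \o gh) x by move=> x; rewrite /= ghE rn0.
have gh0' : forall x : ME, 0 <= (EFin \o gh) x by move=> x; rewrite /= ghE rn0.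
have tot : \int[P]_x (EFin \o gh) x = 1.
  rewrite -(transferP hEB P measurableT mgh' gh0').
  rewrite (eq_integral rn); last by move=> x _; rewrite /= ghE.
  by rewrite -rnE //; exact: probability_setT.
pose Q' := (densP mghB gh0 tot : probability MB R).
have Q'E : forall X, E X -> QE X = Q' X.
  move=> X EX; have mX : measurable (X : set ME) by exact: sub_sigma_algebra.
  rewrite rnE //= /densP -(transferP hEB P mX mgh' gh0').
  by apply: eq_integral => x _; rewrite /= ghE.
exists Q'; split.
  have [_ [_ _ _ _ D5']] := HD subB P Q'.
  have e1 : D QE PE = D Q' P.
    by apply: D5' => //; exists gh; split => //.
  have e2 : D QE PE <= D Q P by apply: D4.
  by rewrite -e1; exact: le_trans e2 hQ.
have M0 : (0 <= M)%R := le_trans (normr_ge0 _) (piM point).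
case: hpibar => mpb ipb cpb.
have ipi : P.-integrable [set: MB] (EFin \o pi) := @bnd_int _ MB R P pi M hpim piM.
have affE : forall (mu : probability MB R) (a c : R) (f : Th -> R),
    mu.-integrable [set: MB] (EFin \o f) -> forall X : set MB, measurable X ->
    \int[mu]_(x in X) (a * f x + c)%:E = a%:E * \int[mu]_(x in X) (f x)%:E + c%:E * mu X.
  move=> mu a c f fi X mX.
  have fiX : mu.-integrable X (EFin \o f) := integrableS measurableT mX (subsetT _) fi.
  under eq_integral do rewrite EFinD EFinM.
  rewrite integralD //; first last.
  - exact: finite_measure_integrable_cst.
  - exact: integrableZl.
  by rewrite integralZl // integral_cst.
have tw : forall a : R, (`|a| = 1)%R ->
  exists r : ME -> \bar R, [/\ forall x, 0 <= r x, measurable_fun [set: ME] r,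
    ae_eq PE [set: ME] (EFin \o (fun x => a * pibar x + M)%R) r &
    forall phi : ME -> \bar R, measurable_fun [set: ME] phi -> (forall x, 0 <= phi x) ->
      \int[P]_x (phi x * (a * pi x + M)%:E) = \int[PE]_x (phi x * r x)].
  move=> a ha.
  have pab x : (- M <= a * pi x <= M)%R by rewrite -ler_norml normrM ha mul1r.
  apply: (@tower (M + M)).
  - exact: measurable_funD (measurable_funM (measurable_cst _) hpim) (measurable_cst _).
  - by move=> x; case/andP: (pab x) => ? ?; lra.
  - by move=> x; case/andP: (pab x) => ? ?; lra.
  - exact: measurable_funD (measurable_funM (measurable_cst _) mpb) (measurable_cst _).
  - rewrite (_ : EFin \o _ = (fun x => a%:E * (pibar x)%:E) \+ (EFin \o cst M)); last first.
      by apply/funext => x; rewrite /= EFinD EFinM.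
    apply: integrableD => //; first exact: integrableZl.
    exact: finite_measure_integrable_cst.
  - move=> X EX; have mX : measurable (X : set MB) by apply: hEB; exact: sub_sigma_algebra.
    by rewrite !affE // cpb.
have [r1 [r10 mr1 ae1 ph1]] := tw 1%R (normr1 _).
have [r2 [r20 mr2 ae2 _]] : exists r : ME -> \bar R, [/\ forall x, 0 <= r x, measurable_fun [set: ME] r,
    ae_eq PE [set: ME] (EFin \o (fun x => -1 * pibar x + M)%R) r & True].
  have hn1 : `|(-1 : R)|%R = 1%R by rewrite normrN normr1.
  have [r [? ? ? _]] := tw (-1)%R hn1.
  by exists r; split.
have aeQ : forall Pr : Th -> Prop, (\forall x \ae PE, Pr x) -> (\forall x \ae Q, Pr x).
  move=> Pr [N [mN PN sub]]; exists N; split => //; first exact: hEB.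
  exact: QP' _ (hEB mN) PN.
have bndQ : \forall x \ae Q, (`|pibar x| <= M)%R /\ (1 * pibar x + M)%:E = r1 x.
  apply: aeQ; move: ae1 ae2; apply: filterS2 => x e1 e2.
  have := r10 x; have := r20 x; rewrite -e1 // -e2 // !lee_fin => h2 h1.
  split => //; rewrite ler_norml; apply/andP; split; lra.
have mpbE : measurable_fun [set: ME] (EFin \o pibar) by exact/measurable_EFinP.
have mpbB : measurable_fun [set: MB] (EFin \o pibar) := @mfun21 _ _ _ R hEB _ mpbE.
have ipbQ : Q.-integrable [set: MB] (EFin \o pibar).
  apply/integrableP; split => //.
  apply: (@le_lt_trans _ _ (\int[Q]_x (cst M%:E) x)).
    apply: ae_ge0_le_integral => //.
    - exact: measurableT_comp (@abse_measurable R _) mpbB.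
    - by apply: (@filterS _ _ (ae_filter_ringOfSetsType Q) _ _ _ bndQ) => x [+ _] _; rewrite /= lee_fin.
  by rewrite integral_cst //= probability_setT mule1 ltry.
have ipiQ' : Q'.-integrable [set: MB] (EFin \o pi) := @bnd_int _ MB R Q' pi M hpim piM.
have c1 := affE Q' 1%R M pi ipiQ' setT measurableT.
rewrite probability_setT mule1 mul1e in c1.
have c9 := affE Q 1%R M pibar ipbQ setT measurableT.
rewrite probability_setT mule1 mul1e in c9.
suff : \int[Q']_x (1 * pi x + M)%:E = \int[Q]_x (1 * pibar x + M)%:E.
  by rewrite c1 c9 => /(congr1 (fun z => z - M%:E)); rewrite !addeK.
have mh1 : measurable_fun [set: MB] (EFin \o (fun x => 1 * pi x + M)%R).
  apply/measurable_EFinP.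
  exact: measurable_funD (measurable_funM (measurable_cst _) hpim) (measurable_cst _).
have h10 : forall x : MB, 0 <= (EFin \o (fun x => 1 * pi x + M)%R) x.
  move=> x; rewrite /= lee_fin mul1r; have := piM x; rewrite ler_norml => /andP[? ?]; lra.
rewrite -(@DC _ MB R P Q' (EFin \o gh) mghB gh0 (fun A mA => erefl) _ mh1 h10).
transitivity (\int[P]_x ((EFin \o gh) x * (1 * pi x + M)%:E)).
  by apply: eq_integral => x _; rewrite muleC.
rewrite (ph1 _ mgh' gh0').
transitivity (\int[PE]_x (r1 x * Radon_Nikodym_SigmaFinite.f QE PE x)).
  by apply: eq_integral => x _; rewrite muleC /= ghE.
rewrite (@Radon_Nikodym_SigmaFinite.change_of_variables _ ME R QE PE QEPE r1 setT r10 measurableT mr1).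
rewrite /QE (transferP hEB Q measurableT mr1 r10).
apply: ae_eq_integral => //.
- exact: (@mfun21 _ _ _ R hEB _ mr1).
- apply: (@mfun21 _ _ _ R hEB); apply/measurable_EFinP.
  exact: measurable_funD (measurable_funM (measurable_cst _) mpb) (measurable_cst _).
- by apply: (@filterS _ _ (ae_filter_ringOfSetsType Q) _ _ _ bndQ) => x [_ e] _; rewrite -e.
Qed.

End main.

Unset Implicit Arguments.
Set Strict Implicit.

Theorem proposition2 (R : realType) (tl tu : R) (htl : 0 < tl) (htlu : tl < tu)
  (D : divergence htlu) (HD : assumptionD D)
  (P : probability (g_sigma_algebraType (borel_Theta htlu)) R)
  (eta : R) (heta : 0 < eta)
  (pi : Theta htlu -> R) (hpib : exists M : R, forall x, `|pi x| <= M)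
  (hpim : measurable_fun [set: g_sigma_algebraType (borel_Theta htlu)] pi)
  (E : set (set (Theta htlu))) (hE : sub_sigma E)
  (pibar : Theta htlu -> R) (hpibar : cond_exp P E pi pibar) :
  (ereal_inf [set (\int[Q]_x (pibar x)%:E)%E
     | Q in [set Q : probability (g_sigma_algebraType (borel_Theta htlu)) R
              | (D _ Q P <= eta%:E)%E]]
   >= ereal_inf [set (\int[Q]_x (pi x)%:E)%E
     | Q in [set Q : probability (g_sigma_algebraType (borel_Theta htlu)) R
              | (D _ Q P <= eta%:E)%E]])%E.
Proof.
case: hpib => M piM; case: hE => sigE EB.
apply: le_ereal_inf_tmp => _ [Q hQ <-].
have [Q' [hQ' e]] := @perQ R tl tu htlu E sigE EB P D HD M pi piM hpim pibar hpibar Q eta hQ.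
rewrite -e; apply: ereal_inf_lbound; exists Q' => //.
Qed.
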